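(* Let $T$ and $k$ be positive integers and let $p_1,\dots,p_k\in(0,1]$, with $q_i=1-p_i$. Consider blocks $i=1,\dots,k$, each of $T$ slots. In block $i$ the slot success indicators are i.i.d. Bernoulli$(p_i)$, and the blocks are independent. Block $0$ is a virtual block that is always successful; accordingly set $q_0=0$. Let $Z(i)$ indicate that block $i$ contains at least one success. On the event $Z(k)=1$, define the following quantities: - $\kappa\in\{1,\dots,k\}$, such that $k-\kappa$ is the most recent block before $k$ with $Z(k-\kappa)=1$; - $X_k$, the number of failure slots before the first success in block $k$. The peak age of information of the first successfully received input in block $k$ is $$\Delta^{\rm P}_{\kappa,k}=\kappa T+X_k+1.$$ Then $$\Theta^{\rm pa}_k:=\mathbb{E}[\Delta^{\rm P}_{\kappa,k}\mid Z(k)=1]=T\sum_{\kappa=1}^{k}\kappa(1-q_{k-\kappa}^T)\prod_{i=k-\kappa+1}^{k-1}q_i^T+\Big(\frac{q_k}{p_k}-\frac{Tq_k^T}{1-q_k^T}\Big)+1.$$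
   Context: Empty products equal $1$. The block-$0$ convention means block $0$ is always treated as a successful block, so $\kappa=k$ corresponds to no successful block among $1,\dots,k-1$. *)

(* Defs.v *)
(* finite discrete probability over the product space of slot outcomes. *)
From mathcomp Require Import all_boot all_order all_algebra.
Set Implicit Arguments. Unset Strict Implicit. Unset Printing Implicit Defensive.
Import Order.TTheory GRing.Theory Num.Theory.
Local Open Scope ring_scope.

(* An outcome: for each real block j : 'I_k (representing block j+1) and each
   slot t : 'I_T, whether slot t of that block is a success. *)
Definition outcome (k T : nat) := {ffun 'I_k -> {ffun 'I_T -> bool}}.

Definition qq {R : ringType} (p : nat -> R) (i : nat) : R :=
  if i == 0%N then 0 else 1 - p i.

Definition prob {R : ringType} (k T : nat) (p : nat -> R) (w : outcome k T) : R :=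
  \prod_(j < k) \prod_(t < T) (if w j t then p j.+1 else 1 - p j.+1).

Definition Z (k T : nat) (w : outcome k T) (i : nat) : bool :=
  if i is i'.+1 then
    (if insub i' is Some j then [exists t, w j t] else false)
  else true.

Definition kappa (k T : nat) (w : outcome k T) : nat :=
  (find (fun m => Z w (k - m)) (iota 1 k)).+1.

Definition Xk (k T : nat) (w : outcome k T) : nat :=
  if insub k.-1 is Some j then find (fun t : 'I_T => w j t) (enum 'I_T) else 0%N.

Definition peakAoI (k T : nat) (w : outcome k T) : nat :=
  (kappa w * T + Xk w + 1)%N.

Definition Theta_pa {R : fieldType} (k T : nat) (p : nat -> R) : R :=
  (\sum_(w : outcome k T | Z w k) prob p w * (peakAoI w)%:R)
  / (\sum_(w : outcome k T | Z w k) prob p w).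

(* Main.v *)
Require Import Defs.
From mathcomp Require Import all_boot all_order all_algebra.
From mathcomp Require Import zify ring lra.
Import Order.TTheory GRing.Theory Num.Theory.
Local Open Scope ring_scope.

Section Aux.
Variable R : comNzRingType.

Lemma prod_bool (I : finType) (c : pred I) :
  \prod_(i : I) ((c i)%:R : R) = ([forall i, c i])%:R.
Proof.
case: (boolP [forall i, c i]) => [/forallP H | /forallPn [i ci]].
  by rewrite big1 // => i _; rewrite H.
by rewrite (bigD1 i) //= (negbTE ci) mul0r.
Qed.

Lemma sumffA (I J : finType) (F : I -> J -> R) :
  \sum_(f : {ffun I -> J}) \prod_i F i (f i) = \prod_i \sum_j F i j.
Proof. by rewrite bigA_distr_bigA. Qed.

Lemma sum_cond (I : finType) (P : pred I) (f : I -> R) :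
  \sum_(i | P i) f i = \sum_i f i * (P i)%:R.
Proof.
rewrite big_mkcond; apply: eq_bigr => i _.
by case: (P i); rewrite ?mulr1 ?mulr0.
Qed.

Definition mu (T : nat) (r : R) (b : {ffun 'I_T -> bool}) : R :=
  \prod_(t < T) (if b t then r else 1 - r).
Arguments mu {T} r b.

Lemma sum_forall T r (P : pred 'I_T) :
  \sum_(b : {ffun 'I_T -> bool}) mu r b * ([forall t, P t ==> ~~ b t])%:R
  = \prod_(t < T) (if P t then 1 - r else 1).
Proof.
under eq_bigr do rewrite -(prod_bool _ (fun t => P t ==> ~~ _ t)) /mu -big_split /=.
rewrite (sumffA _ _ (fun t (y : bool) => (if y then r else 1 - r) * (P t ==> ~~ y)%:R)); apply: eq_bigr => t _.
rewrite big_bool /=; case: (P t) => /=; rewrite ?mulr1 ?mulr0 ?add0r //.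
by rewrite addrC subrK.
Qed.

Lemma sum_mu T r : \sum_(b : {ffun 'I_T -> bool}) mu r b = 1.
Proof.
have <- : \prod_(t < T) (if (pred0 : pred 'I_T) t then 1 - r else 1) = 1 by rewrite big1.
rewrite -(sum_forall T r pred0); apply: eq_bigr => b _.
by rewrite (_ : [forall t, _] = true) ?mulr1 //; apply/forallP.
Qed.

Lemma sum_noE T r : \sum_(b : {ffun 'I_T -> bool}) mu r b * (~~ [exists t, b t])%:R
  = (1 - r) ^+ T.
Proof.
under eq_bigr do rewrite negb_exists.
rewrite (sum_forall T r predT) prodr_const card_ord //.
Qed.

Lemma sum_E T r : \sum_(b : {ffun 'I_T -> bool}) mu r b * ([exists t, b t])%:R
  = 1 - (1 - r) ^+ T.
Proof.
apply: (@addIr _ ((1 - r) ^+ T)); rewrite subrK -{1}(sum_noE T r) -big_split /= -[RHS](sum_mu T r).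
apply: eq_bigr => b _.
by case: [exists t, b t]; rewrite /= ?mulr1 ?mulr0 ?addr0 ?add0r.
Qed.

Lemma find_gt T (b : {ffun 'I_T -> bool}) (x : nat) : (x < T)%N ->
  (x < find b (enum 'I_T))%N = [forall t : 'I_T, (t <= x)%N ==> ~~ b t].
Proof.
move=> xT; apply/idP/forallP.
  move=> H t; apply/implyP => tx.
  have := @before_find _ t b (enum 'I_T) t (leq_ltn_trans tx H).
  by rewrite nth_ord_enum => ->.
move=> H; rewrite ltnNge; apply/negP => hle.
have hf : (find b (enum 'I_T) < T)%N by exact: leq_ltn_trans hle xT.
have := @nth_find _ (Ordinal xT) b (enum 'I_T).
rewrite has_find size_enum_ord => /(_ hf).
have := nth_ord_enum (Ordinal xT) (Ordinal hf); rewrite /= => ->.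
by have := H (Ordinal hf); rewrite /= hle /= => /negbTE ->.
Qed.

Lemma sum_lt_min n f : (\sum_(0 <= x < n) ((x < f)%N : nat) = minn f n)%N.
Proof.
elim: n => [|n IH]; first by rewrite big_geq //; lia.
rewrite big_nat_recr //= IH; case: ltnP => h /=; lia.
Qed.

Lemma find_sum T (b : {ffun 'I_T -> bool}) :
  ([exists t, b t])%:R * (find b (enum 'I_T))%:R =
  \sum_(x < T) (((x < find b (enum 'I_T))%N)%:R - (~~ [exists t, b t])%:R) :> R.
Proof.
case: (boolP [exists t, b t]) => hE.
  rewrite /= mul1r.
  under eq_bigr do rewrite subr0.
  rewrite -natr_sum.
  have := sum_lt_min T (find b (enum 'I_T)); rewrite big_mkord => ->.
  congr (_%:R); have := find_size b (enum (ordinal T)); rewrite size_enum_ord => h; symmetry; exact/minn_idPl.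
rewrite (_ : false%:R = 0 :> R) // mul0r.
have hf : find b (enum 'I_T) = T.
  rewrite hasNfind ?size_enum_ord //; apply: contra hE => /hasP [t _ bt].
  by apply/existsP; exists t.
rewrite hf big1 // => x _; by rewrite ltn_ord subrr.
Qed.


Lemma prod_le T (c : R) x : (x < T)%N ->
  \prod_(t < T) (if (t <= x)%N then c else 1) = c ^+ x.+1.
Proof.
move=> xT.
rewrite -(big_mkord xpredT (fun t => if (t <= x)%N then c else 1)).
rewrite (big_cat_nat (n:=x.+1)) //.
rewrite (eq_big_nat _ _ (F2 := fun _ => c)); last by move=> i /andP[_ h]; rewrite -ltnS h.
rewrite prodr_const_nat subn0.
rewrite (eq_big_nat _ _ (F2 := fun _ => 1)); last by move=> i /andP[h _]; rewrite leqNgt h.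
by rewrite big1_eq /= mulr1.
Qed.

Lemma sum_EX T r :
  \sum_(b : {ffun 'I_T -> bool}) mu r b * (([exists t, b t])%:R * (find b (enum 'I_T))%:R)
  = \sum_(x < T) ((1 - r) ^+ x.+1 - (1 - r) ^+ T).
Proof.
under eq_bigr do rewrite find_sum mulr_sumr.
rewrite exchange_big /=; apply: eq_bigr => x _.
under eq_bigr do rewrite mulrBr.
rewrite sumrB sum_noE; congr (_ - _).
under eq_bigr do rewrite (find_gt _ _ _ (ltn_ord x)).
by rewrite (sum_forall T r (fun t : 'I_T => (t <= x)%N)) prod_le.
Qed.

Lemma find_eqP (X : eqType) (a : pred X) (s : seq X) x0 i : (i < size s)%N ->
  (find a s == i) = a (nth x0 s i) && all (fun j => ~~ a (nth x0 s j)) (iota 0 i).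
Proof.
move=> hi; apply/eqP/andP.
  move=> hf; rewrite -hf; split.
    by apply: nth_find; rewrite has_find hf.
  by apply/allP => j; rewrite mem_iota add0n => /andP[_ hj]; rewrite before_find.
case=> ha /allP hall.
have hhas : has a s by apply/hasP; exists (nth x0 s i) => //; exact: mem_nth.
case: (ltngtP (find a s) i) => // h.
  have := hall (find a s); rewrite mem_iota /= h => /(_ isT).
  by rewrite nth_find.
by rewrite before_find in ha.
Qed.

Lemma nat_ind_sum n N : (1 <= n <= N)%N ->
  n%:R = \sum_(1 <= m < N.+1) m%:R * ((n == m))%:R :> R.
Proof.
move=> hn.
rewrite (eq_bigr (fun m => if m == n then n%:R else 0)); last first.
  by move=> m _; rewrite eq_sym; case: eqP => [->|]; rewrite ?mulr1 ?mulr0.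
by rewrite -big_mkcond big_nat1_eq ltnS hn.
Qed.

End Aux.

Arguments mu {R T} r b.

Section Out.
Variable R : comNzRingType.
Variables (K T : nat) (p : nat -> R).

Lemma marginal (j0 : 'I_K.+1) (G : {ffun 'I_T -> bool} -> R) :
  \sum_(w : outcome K.+1 T) prob p w * G (w j0) = \sum_b mu (p j0.+1) b * G b.
Proof.
transitivity (\sum_(w : outcome K.+1 T)
   \prod_(j : 'I_K.+1) (mu (p j.+1) (w j) * (if j == j0 then G (w j) else 1))).
  apply: eq_bigr => w _; rewrite big_split /=; congr (_ * _).
  by rewrite (bigD1 j0) //= eqxx big1 ?mulr1 // => j /negbTE ->.
rewrite (sumffA _ _ _ (fun (j : 'I_K.+1) b => mu (p j.+1) b * (if j == j0 then G b else 1))).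
rewrite (bigD1 j0) //= [X in _ * X]big1 ?mulr1.
  by apply: eq_bigr => b _; rewrite eqxx.
move=> j /negbTE hj; under eq_bigr do rewrite hj mulr1.
exact: sum_mu.
Qed.

Lemma prod_forall (G : 'I_K.+1 -> {ffun 'I_T -> bool} -> bool) :
  \sum_(w : outcome K.+1 T) prob p w * ([forall j, G j (w j)])%:R
  = \prod_(j : 'I_K.+1) \sum_b mu (p j.+1) b * (G j b)%:R.
Proof.
under eq_bigr do rewrite -(prod_bool _ _ (fun j => G j (_ j))) -big_split /=.
by rewrite (sumffA _ _ _ (fun (j : 'I_K.+1) b => mu (p j.+1) b * (G j b)%:R)).
Qed.

Lemma ZS (w : outcome K.+1 T) (j : 'I_K.+1) : Z w j.+1 = [exists t, w j t].
Proof. by rewrite /Z valK. Qed.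

Lemma Zlast (w : outcome K.+1 T) : Z w K.+1 = [exists t, w ord_max t].
Proof. exact: (ZS w ord_max). Qed.

Lemma Xlast (w : outcome K.+1 T) : Xk w = find (w ord_max) (enum 'I_T).
Proof.
have h : insub K = Some (@ord_max K) := valK ord_max.
by rewrite /Xk /= h.
Qed.

Lemma kappa_eq (w : outcome K.+1 T) m : (1 <= m <= K.+1)%N ->
  (kappa w == m) = Z w (K.+1 - m) && all (fun j => ~~ Z w (K.+1 - j.+1)) (iota 0 m.-1).
Proof.
case: m => [//|m] /= hm.
rewrite /kappa eqSS (find_eqP _ _ _ 0%N) ?size_iota //.
rewrite nth_iota ?add1n //.
congr (_ && _); apply: eq_in_all => j; rewrite mem_iota => /andP[_ hj].
rewrite nth_iota ?add1n //; lia.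
Qed.

Lemma kappa_le (w : outcome K.+1 T) : (1 <= kappa w <= K.+1)%N.
Proof.
rewrite /kappa /= ltnS.
have : has (fun m => Z w (K.+1 - m)) (iota 1 K.+1).
  apply/hasP; exists K.+1; last by rewrite subnn.
  by rewrite mem_iota; apply/andP; split => //; lia.
by rewrite has_find size_iota.
Qed.


Definition Gm (m : nat) (j : 'I_K.+1) (b : {ffun 'I_T -> bool}) : bool :=
  if j.+1 == K.+1 then [exists t, b t]
  else if (j.+1 == K.+1 - m)%N then [exists t, b t]
  else if (K.+1 - m < j.+1)%N then ~~ [exists t, b t] else true.

Lemma kappa_G (w : outcome K.+1 T) m : (1 <= m <= K.+1)%N ->
  [exists t, w ord_max t] && (kappa w == m) = [forall j, Gm m j (w j)].
Proof.
move=> hm; rewrite kappa_eq //; apply/idP/forallP.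
  case/and3P => hE hZ /allP hall j; rewrite /Gm.
  case: ifP => h1.
    suff -> : j = ord_max by [].
    by apply: val_inj => /=; move/eqP: h1 => [].
  case: ifP => h2; first by rewrite -ZS (eqP h2).
  case: ifP => h3 //.
  move/negbT: h1 => h1.
  have hj : (j < K)%N by have := ltn_ord j; lia.
  have := hall (K - j.+1)%N; rewrite mem_iota add0n.
  have -> : (K.+1 - (K - j.+1).+1 = j.+1)%N by lia.
  rewrite ZS => H; apply: H; apply/andP; split; lia.
move=> H; apply/and3P; split.
- by have := H ord_max; rewrite /Gm /= eqxx.
- case: (posnP (K.+1 - m)) => [->//|hpos].
  have hi : (K - m < K.+1)%N by lia.
  have -> : (K.+1 - m = (Ordinal hi).+1)%N by rewrite /=; lia.
  rewrite ZS; have := H (Ordinal hi); rewrite /Gm /=.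
  case: ifP => // _; rewrite ifT //; apply/eqP; lia.
- apply/allP => j; rewrite mem_iota add0n => /andP[_ hj].
  have hi : (K - j.+1 < K.+1)%N by lia.
  have -> : (K.+1 - j.+1 = (Ordinal hi).+1)%N by rewrite /=; lia.
  rewrite ZS; have := H (Ordinal hi); rewrite /Gm /=.
  rewrite ifF; last by apply/negbTE; lia.
  rewrite ifF; last by apply/negbTE; lia.
  by rewrite ifT //; lia.
Qed.

Definition cc (m i : nat) : R :=
  if i == K.+1 then 1 - qq p i ^+ T
  else if (i == K.+1 - m)%N then 1 - qq p i ^+ T
  else if (K.+1 - m < i)%N then qq p i ^+ T else 1.

Lemma cost (j : 'I_K.+1) m :
  \sum_b mu (p j.+1) b * (Gm m j b)%:R = cc m j.+1.
Proof.
rewrite /Gm /cc /qq /=.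
case: ifP => _; first exact: sum_E.
case: ifP => _; first exact: sum_E.
case: ifP => _; first exact: sum_noE.
rewrite -[RHS](sum_mu _ T (p j.+1)); apply: eq_bigr => b _.
by rewrite mulr1.
Qed.

Lemma cc_prod m : (0 < T)%N -> (1 <= m <= K.+1)%N ->
  \prod_(j < K.+1) cc m j.+1 =
  (1 - qq p (K.+1 - m) ^+ T) * \prod_(K.+1 - m + 1 <= i < K.+1) qq p i ^+ T
    * (1 - qq p K.+1 ^+ T).
Proof.
move=> hT hm.
rewrite -(big_mkord xpredT (fun j => cc m j.+1)).
have -> : \prod_(0 <= i < K.+1) cc m i.+1 = \prod_(1 <= i < K.+2) cc m i by rewrite big_add1.
have c0 : cc m 0 = 1.
  rewrite /cc /qq /=; case: ifP => _ //.
  by rewrite expr0n gtn_eqF // subr0.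
have -> : \prod_(1 <= i < K.+2) cc m i = \prod_(0 <= i < K.+2) cc m i.
  by rewrite [RHS]big_ltn // c0 mul1r.
rewrite (big_cat_nat (n := K.+1 - m)) //=; last by lia.
rewrite [X in X * _](eq_big_nat _ _ (F2 := fun _ => 1)); last first.
  move=> i /andP[_ hi]; rewrite /cc.
  rewrite ifF; last by apply/negbTE; lia.
  rewrite ifF; last by apply/negbTE; lia.
  by rewrite ifF //; apply/negbTE; lia.
rewrite big1_eq mul1r big_ltn; last by lia.
rewrite big_nat_recr /=; last by lia.
rewrite {1}/cc ifF; last by apply/negbTE; lia.
rewrite eqxx {2}/cc eqxx addn1 mulrA.
congr (_ * _ * _); apply: eq_big_nat => i /andP[h1 h2]; rewrite /cc.
rewrite ifF; last by apply/negbTE; lia.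
rewrite ifF; last by apply/negbTE; lia.
by rewrite ifT //; lia.
Qed.

End Out.

Lemma geo (F : comNzRingType) (q : F) n :
  (1 - q) * \sum_(x < n) q ^+ x.+1 = q * (1 - q ^+ n).
Proof.
elim: n => [|n IH]; first by rewrite big_ord0 expr0 subrr !mulr0.
rewrite big_ord_recr /= mulrDr IH !exprS; ring.
Qed.

Theorem theorem3 (R : realFieldType) (T k : nat) (p : nat -> R)
  (hT : (0 < T)%N) (hk : (0 < k)%N)
  (hp : forall i, (1 <= i <= k)%N -> 0 < p i <= 1) :
  Theta_pa k T p =
    T%:R * (\sum_(1 <= m < k.+1)
              m%:R * (1 - qq p (k - m) ^+ T)
                   * \prod_(k - m + 1 <= i < k) qq p i ^+ T)
    + (qq p k / p k - T%:R * qq p k ^+ T / (1 - qq p k ^+ T)) + 1.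
Proof.
case: k hk hp => [//|K] _ hp.
have /andP[hp0 hp1] : 0 < p K.+1 <= 1 by apply: hp; rewrite /= leqnn.
set q := qq p K.+1.
have hq : q = 1 - p K.+1 by [].
have q0 : 0 <= q by rewrite hq; lra.
have q1 : q < 1 by rewrite hq; lra.
have hqT : q ^+ T < 1 by rewrite exprn_ilt1 // -lt0n.
have hDn : 1 - q ^+ T != 0 by rewrite subr_eq0 eq_sym lt_eqF.
have hpn : p K.+1 != 0 by rewrite gt_eqF.
have hD' : \sum_(w : outcome K.+1 T) prob p w * ([exists t, w ord_max t])%:R = 1 - q ^+ T.
  by rewrite (marginal _ _ _ _ ord_max (fun b => ([exists t, b t])%:R)) sum_E.
have hD : \sum_(w : outcome K.+1 T | Z w K.+1) prob p w = 1 - q ^+ T.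
  rewrite sum_cond -hD'; apply: eq_bigr => w _; by rewrite Zlast.
have hS2 : \sum_(w : outcome K.+1 T) prob p w * (([exists t, w ord_max t])%:R * (Xk w)%:R)
    = \sum_(x < T) (q ^+ x.+1 - q ^+ T).
  under eq_bigr do rewrite Xlast.
  rewrite (marginal _ _ _ _ ord_max
     (fun b => ([exists t, b t])%:R * (find b (enum 'I_T))%:R)).
  exact: sum_EX.
have hS1 : \sum_(w : outcome K.+1 T) prob p w * (([exists t, w ord_max t])%:R * (kappa w)%:R)
    = \sum_(1 <= m < K.+2) (m%:R * (1 - qq p (K.+1 - m) ^+ T)
                   * \prod_(K.+1 - m + 1 <= i < K.+1) qq p i ^+ T) * (1 - q ^+ T).
  under eq_bigr do rewrite (nat_ind_sum _ _ K.+1 (kappa_le _ _ _)) !mulr_sumr.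
  rewrite exchange_big /=; apply: eq_big_nat => m hm.
  transitivity (m%:R * \sum_(w : outcome K.+1 T) prob p w *
                  ([forall j, Gm K T m j (w j)])%:R).
    rewrite mulr_sumr; apply: eq_bigr => w _.
    by rewrite -kappa_G // -mulnb natrM; ring.
  rewrite prod_forall.
  rewrite (eq_bigr _ (fun (j : 'I_K.+1) _ => cost _ K T p j m)).
  by rewrite cc_prod // !mulrA.
rewrite /Theta_pa hD sum_cond.
transitivity ((T%:R * \sum_(w : outcome K.+1 T) prob p w * (([exists t, w ord_max t])%:R * (kappa w)%:R)
   + \sum_(w : outcome K.+1 T) prob p w * (([exists t, w ord_max t])%:R * (Xk w)%:R)
   + \sum_(w : outcome K.+1 T) prob p w * ([exists t, w ord_max t])%:R) / (1 - q ^+ T)).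
  congr (_ / _); rewrite mulr_sumr -!big_split; apply: eq_bigr => w _.
  rewrite Zlast /peakAoI natrD natrD natrM /=; ring.
rewrite hS1 hS2 hD' -mulr_suml sumrB sumr_const card_ord -mulr_natl.
set S := \sum_(1 <= m < K.+2) _.
set G := \sum_(x < T) q ^+ x.+1.
have hG : G = q * (1 - q ^+ T) / p K.+1.
  have h1q : 1 - q = p K.+1 by rewrite hq; ring.
  by rewrite -geo -/G h1q mulrC mulKf.
rewrite hG; field.
by rewrite hDn hpn.
Qed.
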